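(* Every $K_4$-free disk graph is $11$-degenerate.
   Context: A disk graph is the intersection graph of a finite set of closed disks in $\mathbb{R}^2$. A graph is $K_4$-free if it contains no complete subgraph on $4$ vertices. A graph is $c$-degenerate if its vertices can be ordered $v_1,\dots,v_n$ so that each $v_i$ has at most $c$ neighbours among $v_1,\dots,v_{i-1}$. *)

(* Defs.v *)
From Stdlib Require Import Reals.
From mathcomp Require Import all_boot.
Set Implicit Arguments. Unset Strict Implicit. Unset Printing Implicit Defensive.

Local Open Scope R_scope.

Record disk := Disk { dcenter : (R * R)%type ; dradius : R }.

Definition in_disk (D : disk) (p : (R * R)%type) : Prop :=
  (fst p - fst (dcenter D))^2 + (snd p - snd (dcenter D))^2 <= (dradius D)^2.

Definition disks_intersect (D E : disk) : Prop :=
  exists p : (R * R)%type, in_disk D p /\ in_disk E p.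

Definition simple_graph (V : finType) (adj : V -> V -> Prop) : Prop :=
  (forall u v, adj u v -> adj v u) /\ (forall v, ~ adj v v).

Definition is_disk_graph (V : finType) (adj : V -> V -> Prop) : Prop :=
  exists D : V -> disk,
    injective D /\
    (forall v, 0 < dradius (D v)) /\
    (forall u v, adj u v <-> (u <> v /\ disks_intersect (D u) (D v))).

Definition K4_free (V : finType) (adj : V -> V -> Prop) : Prop :=
  ~ exists a b c d : V,
      (a <> b /\ a <> c /\ a <> d /\ b <> c /\ b <> d /\ c <> d) /\
      (adj a b /\ adj a c /\ adj a d /\ adj b c /\ adj b d /\ adj c d).

(* c-degenerate: there is an ordering v_1,...,v_n of all vertices (a
   duplicate-free sequence listing every vertex) such that each vertex has
   at most c neighbours among the vertices preceding it. *)
Definition degenerate (c : nat) (V : finType) (adj : V -> V -> Prop) : Prop :=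
  exists s : seq V,
    uniq s /\ (forall v : V, v \in s) /\
    forall (s1 s2 : seq V) (v : V), s = s1 ++ v :: s2 ->
      forall S : seq V, uniq S ->
        (forall u, u \in S -> u \in s1 /\ adj u v) ->
        (size S <= c)%N.

(* Main.v *)
Require Import Defs.
From Stdlib Require Import Reals Lra Psatz.
From mathcomp Require Import all_boot.
From mathcomp Require Import zify.
Set Implicit Arguments. Unset Strict Implicit.


Lemma size_cnt (T : eqType) (k : T -> nat) (S : seq T) :
  (forall x, x \in S -> k x < 6) ->
  size S = count (fun x => k x == 0) S + count (fun x => k x == 1) S + count (fun x => k x == 2) S
   + count (fun x => k x == 3) S + count (fun x => k x == 4) S + count (fun x => k x == 5) S.
Proof.
 elim: S => [|x S IH] //= H.
 have Hx: k x < 6 by apply: H; rewrite inE eqxx.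
 rewrite IH; last by move=> y Hy; apply: H; rewrite inE Hy orbT.
 move: Hx; case: (k x) => [|[|[|[|[|[|n]]]]]] //= _; lia.
Qed.

Lemma count_bound (T : eqType) (S : seq T) (k : T -> nat) (good : T -> T -> Prop) (u0 : T) :
 uniq S -> u0 \in S -> k u0 = 0 -> (forall x, x \in S -> k x < 6) ->
 (forall T', uniq T' -> {subset T' <= S} ->
    (forall x y, x \in T' -> y \in T' -> x != y -> good x y) -> size T' <= 2) ->
 (forall x y, x \in S -> y \in S -> k x = k y -> good x y) ->
 (forall x, x \in S -> k x = 5 -> good u0 x /\ good x u0) ->
 size S <= 11.
Proof.
 move=> HS Hu0 Hk0 Hlt Hcl Hsame H5.
 have Hc: forall j, count (fun x => k x == j) S <= 2.
 { move=> j; rewrite -size_filter; apply: Hcl.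
   - exact: filter_uniq.
   - by move=> x; rewrite mem_filter => /andP [].
   - move=> x y; rewrite !mem_filter => /andP [/eqP Hx xS] /andP [/eqP Hy yS] _.
     apply: Hsame => //; by rewrite Hx Hy. }
 have Hc5: count (fun x => k x == 5) S <= 1.
 { have: size (u0 :: filter (fun x => k x == 5) S) <= 2.
   { apply: Hcl.
     - rewrite /= filter_uniq // andbT mem_filter Hk0 //.
     - move=> x; rewrite inE mem_filter => /orP [/eqP -> //| /andP [] //].
     - move=> x y; rewrite !inE !mem_filter.
       move=> /orP [/eqP Ex | /andP [/eqP Hx xS]] /orP [/eqP Ey | /andP [/eqP Hy yS]] Hne.
       + by move: Hne; rewrite Ex Ey eqxx.
       + by rewrite Ex; case: (H5 y yS Hy).
       + by rewrite Ey; case: (H5 x xS Hx).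
       + apply: Hsame => //; by rewrite Hx Hy. }
   by rewrite /= size_filter; lia. }
 rewrite (size_cnt Hlt).
 have := Hc 0; have := Hc 1; have := Hc 2; have := Hc 3; have := Hc 4. lia.
Qed.
Local Open Scope R_scope.

Lemma id1 x y e1 e2 q : q*q = 3/4 ->
   (let a := x*(q*e1+e2/2) - y*(e1/2 - q*e2) in let b := e1*y - e2*x in a*a+b*b+a*b)
   = 3/4 * (e1*e1+e2*e2) * (x*x+y*y).
Proof. intros H. cbv zeta.
 transitivity ((q*q)*((x*e1+y*e2)*(x*e1+y*e2)) + 3/4*((x*e2-y*e1)*(x*e2-y*e1))). field.
 rewrite H. field. Qed.
Lemma core s t s2 t2 : 0<=s -> 0<=t -> 0<=s2 -> 0<=t2 ->
  (s-s2)*(s-s2)+(t-t2)*(t-t2)+(s-s2)*(t-t2) <= s*s+t*t+s*t \/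
  (s-s2)*(s-s2)+(t-t2)*(t-t2)+(s-s2)*(t-t2) <= s2*s2+t2*t2+s2*t2.
Proof. intros.
 set (Q := s*s2+t*t2 + (s*t2+t*s2)/2).
 assert (HQ: 4*Q*Q >= (s*s+t*t+s*t)*(s2*s2+t2*t2+s2*t2)).
 { assert (E: (s*s+t*t+s*t)*(s2*s2+t2*t2+s2*t2) = Q*Q + 3/4*((s*t2-t*s2)*(s*t2-t*s2))) by (unfold Q; field).
   assert (K1: Q - (s*t2-t*s2)/2 >= 0) by (unfold Q; nra).
   assert (K2: Q + (s*t2-t*s2)/2 >= 0) by (unfold Q; nra).
   assert (K3: (Q - (s*t2-t*s2)/2)*(Q + (s*t2-t*s2)/2) >= 0) by nra.
   rewrite E. nra. }
 assert (Q>=0) by (unfold Q; nra).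
 destruct (Rle_dec (s*s+t*t+s*t) (s2*s2+t2*t2+s2*t2)).
 - right. set (N1 := s*s+t*t+s*t) in *. set (N2 := s2*s2+t2*t2+s2*t2) in *.
   assert (0 <= N1) by (unfold N1; nra).
   assert (N1*N1 <= N1*N2) by nra.
   assert (2*Q >= N1) by (apply Rnot_lt_ge; intro; assert ((N1-2*Q)*(N1+2*Q) > 0) by (apply Rmult_lt_0_compat; lra); clearbody Q N1 N2; idtac; lra). unfold N1, N2 in *. unfold Q in *. lra.
 - left. set (N1 := s*s+t*t+s*t) in *. set (N2 := s2*s2+t2*t2+s2*t2) in *.
   assert (0 <= N2) by (unfold N2; nra).
   assert (N2*N2 <= N1*N2) by nra.
   assert (2*Q >= N2) by (apply Rnot_lt_ge; intro; assert ((N2-2*Q)*(N2+2*Q) > 0) by (apply Rmult_lt_0_compat; lra); nra). unfold N1, N2 in *. unfold Q in *. lra.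
Qed.
Lemma tri x1 y1 x2 y2 A B : 0<=A -> 0<=B -> x1^2+y1^2 <= A^2 -> x2^2+y2^2 <= B^2 ->
  (x1+x2)^2+(y1+y2)^2 <= (A+B)^2.
Proof. intros HA HB H1 H2.
 assert (CS: (x1*x2+y1*y2)^2 <= (x1^2+y1^2)*(x2^2+y2^2)).
 { assert (E: (x1^2+y1^2)*(x2^2+y2^2) = (x1*x2+y1*y2)^2 + (x1*y2-y1*x2)^2) by ring.
   rewrite E. assert (0 <= (x1*y2-y1*x2)^2) by (apply pow2_ge_0). lra. }
 assert (P: (x1^2+y1^2)*(x2^2+y2^2) <= A^2*B^2).
 { apply Rmult_le_compat; try lra; apply Rplus_le_le_0_compat; apply pow2_ge_0. }
 assert (S: x1*x2+y1*y2 <= A*B).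
 { apply Rnot_lt_le; intro C. assert (0 <= A*B) by (apply Rmult_le_pos; lra).
   assert ((A*B)^2 < (x1*x2+y1*y2)^2) by (simpl; nra). nra. }
 assert (E: (x1+x2)^2+(y1+y2)^2 = (x1^2+y1^2) + (x2^2+y2^2) + 2*(x1*x2+y1*y2)) by ring.
 rewrite E. assert (E2: (A+B)^2 = A^2+B^2+2*(A*B)) by ring. rewrite E2. lra.
Qed.

Definition shrink (Dv Du : disk) : R*R :=
 let X := fst (dcenter Du) - fst (dcenter Dv) in
 let Y := snd (dcenter Du) - snd (dcenter Dv) in
 if Rle_dec (X^2+Y^2) (4*(dradius Dv)^2) then (X,Y)
 else ((2*dradius Dv/sqrt(X^2+Y^2))*X, (2*dradius Dv/sqrt(X^2+Y^2))*Y).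

Definition shrink_good (Dv Du : disk) (a : R*R) :=
  fst a^2+snd a^2 <= 4*(dradius Dv)^2 /\
  (fst (dcenter Dv) + fst a - fst (dcenter Du))^2 + (snd (dcenter Dv) + snd a - snd (dcenter Du))^2
    <= (dradius Du - dradius Dv)^2.

Lemma shrink_ok Dv Du : 0 < dradius Dv -> dradius Dv <= dradius Du ->
  disks_intersect Dv Du -> shrink_good Dv Du (shrink Dv Du).
Proof.
 destruct Dv as [[C1 C2] r]; destruct Du as [[p1 p2] R0]; cbn [fst snd dcenter dradius is_left].
 intros Hr HR [[z1 z2] [Hz1 Hz2]]. unfold in_disk in *; cbn [fst snd dcenter dradius is_left] in *.
 assert (Hd: (p1-C1)^2+(p2-C2)^2 <= (R0+r)^2).
 { replace (p1-C1) with ((p1-z1)+(z1-C1)) by ring.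
   replace (p2-C2) with ((p2-z2)+(z2-C2)) by ring.
   apply tri; try lra. }
 unfold shrink_good, shrink; cbn [fst snd dcenter dradius is_left].
 destruct (Rle_dec ((p1-C1)^2+(p2-C2)^2) (4*r^2)) as [H|H]; cbn [fst snd dcenter dradius is_left].
 - split. lra. replace (C1 + (p1 - C1) - p1) with 0 by ring.
   replace (C2 + (p2 - C2) - p2) with 0 by ring.
   assert (0 <= (R0-r)^2) by apply pow2_ge_0. simpl; lra.
 - set (d2 := (p1-C1)^2+(p2-C2)^2) in *.
   assert (Hd2: 0 <= d2) by (unfold d2; apply Rplus_le_le_0_compat; apply pow2_ge_0).
   set (d := sqrt d2).
   assert (Hdd: d*d = d2) by (apply sqrt_sqrt; lra).
   assert (Hd0: 0 <= d) by (apply sqrt_pos).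
   assert (Hd2r: 2*r < d) by nra.
   assert (HdR: d <= R0 + r) by nra.
   split.
   + replace ((2*r/d*(p1-C1))^2+(2*r/d*(p2-C2))^2) with ((2*r/d)^2*d2) by (unfold d2; ring).
     rewrite <- Hdd. field_simplify; [lra| lra].
   + replace ((C1 + 2*r/d*(p1-C1) - p1)^2 + (C2 + 2*r/d*(p2-C2) - p2)^2)
       with ((2*r/d - 1)^2*d2) by (unfold d2; ring).
     rewrite <- Hdd.
     replace ((2*r/d - 1)^2*(d*d)) with ((d - 2*r)^2) by (field; lra).
     nra.
Qed.

Lemma mid_ok Dv Du Dw a b : 0 < dradius Dv -> dradius Dv <= dradius Du -> dradius Dv <= dradius Dw ->
  shrink_good Dv Du a -> shrink_good Dv Dw b ->
  (fst a - fst b)^2 + (snd a - snd b)^2 <= 4*(dradius Dv)^2 ->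
  disks_intersect Du Dw.
Proof.
 destruct Dv as [[C1 C2] r]; destruct Du as [[p1 p2] Ru]; destruct Dw as [[q1 q2] Rw];
 destruct a as [a1 a2]; destruct b as [b1 b2]; unfold shrink_good; cbn [fst snd dcenter dradius is_left].
 intros Hr Hu Hw [_ Ha] [_ Hb] Hab. cbn [fst snd] in *.
 exists (C1 + (a1+b1)/2, C2 + (a2+b2)/2). unfold in_disk; cbn [fst snd dcenter dradius is_left]. split.
 - replace (C1 + (a1+b1)/2 - p1) with ((C1 + a1 - p1) + (b1-a1)/2) by field.
   replace (C2 + (a2+b2)/2 - p2) with ((C2 + a2 - p2) + (b2-a2)/2) by field.
   replace (Ru^2) with (((Ru - r) + r)^2) by ring.
   apply tri; [lra|lra|exact Ha|].
   replace (((b1-a1)/2)^2 + ((b2-a2)/2)^2) with (((a1-b1)^2+(a2-b2)^2)/4) by field.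
   lra.
 - replace (C1 + (a1+b1)/2 - q1) with ((C1 + b1 - q1) + (a1-b1)/2) by field.
   replace (C2 + (a2+b2)/2 - q2) with ((C2 + b2 - q2) + (a2-b2)/2) by field.
   replace (Rw^2) with (((Rw - r) + r)^2) by ring.
   apply tri; [lra|lra|exact Hb|].
   replace (((a1-b1)/2)^2 + ((a2-b2)/2)^2) with (((a1-b1)^2+(a2-b2)^2)/4) by field.
   lra.
Qed.

Definition qq := sqrt 3 / 2.
Lemma qq2 : qq*qq = 3/4.
Proof. unfold qq. replace (sqrt 3/2*(sqrt 3/2)) with (sqrt 3 * sqrt 3 / 4) by field.
 rewrite sqrt_sqrt; lra. Qed.

Definition alphaC (e a : R*R) := fst a*(qq*fst e+snd e/2) - snd a*(fst e/2 - qq*snd e).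
Definition betaC (e a : R*R) := fst e*snd a - snd e*fst a.
Definition NN (x y : R) := x*x+y*y+x*y.
Definition vsub (a b : R*R) := (fst a - fst b, snd a - snd b).

Lemma NN_coord e a : NN (alphaC e a) (betaC e a) = 3/4 * (fst e^2+snd e^2) * (fst a^2+snd a^2).
Proof. unfold NN, alphaC, betaC. destruct e as [e1 e2], a as [x y]; cbn [fst snd].
 transitivity ((qq*qq)*((x*e1+y*e2)*(x*e1+y*e2)) + 3/4*((x*e2-y*e1)*(x*e2-y*e1))). field.
 rewrite qq2. field. Qed.

Lemma alpha_sub e a b : alphaC e (vsub a b) = alphaC e a - alphaC e b.
Proof. unfold alphaC, vsub; cbn [fst snd]; field. Qed.
Lemma beta_sub e a b : betaC e (vsub a b) = betaC e a - betaC e b.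
Proof. unfold betaC, vsub; cbn [fst snd]; field. Qed.

Definition sk (k : nat) (x y : R) : R :=
  match k with 0%nat => x | 1%nat => x+y | 2%nat => y | 3%nat => -x | 4%nat => -x-y | _ => -y end.
Definition tk (k : nat) (x y : R) : R :=
  match k with 0%nat => y | 1%nat => -x | 2%nat => -x-y | 3%nat => -y | 4%nat => x | _ => x+y end.
Definition in_cone k x y := 0 <= sk k x y /\ 0 <= tk k x y.

Lemma NN_sk k x y : NN x y = NN (sk k x y) (tk k x y).
Proof. destruct k as [|[|[|[|[|k]]]]]; unfold NN; simpl; field. Qed.
Lemma sk_sub k x y x' y' : sk k (x-x') (y-y') = sk k x y - sk k x' y'.
Proof. destruct k as [|[|[|[|[|k]]]]]; simpl; field. Qed.
Lemma tk_sub k x y x' y' : tk k (x-x') (y-y') = tk k x y - tk k x' y'.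
Proof. destruct k as [|[|[|[|[|k]]]]]; simpl; field. Qed.

Definition cone_of (x y : R) : nat :=
 if Rle_dec 0 x then (if Rle_dec 0 y then 0%nat else if Rle_dec 0 (x+y) then 5%nat else 4%nat)
 else (if Rle_dec y 0 then 3%nat else if Rle_dec 0 (x+y) then 1%nat else 2%nat).

Lemma cone_of_ok x y : in_cone (cone_of x y) x y.
Proof. unfold cone_of; repeat destruct Rle_dec; unfold in_cone; simpl; lra. Qed.
Lemma cone_of_lt x y : (cone_of x y < 6)%N.
Proof. unfold cone_of; repeat destruct Rle_dec; done. Qed.
Lemma cone_of_0 x : 0 <= x -> cone_of x 0 = 0%nat.
Proof. intros H; unfold cone_of; repeat destruct Rle_dec; try lra; done. Qed.

Lemma cone_close k x y x' y' : in_cone k x y -> in_cone k x' y' ->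
  NN (x-x') (y-y') <= NN x y \/ NN (x-x') (y-y') <= NN x' y'.
Proof. intros [H1 H2] [H3 H4].
 rewrite (NN_sk k (x-x') (y-y')) (NN_sk k x y) (NN_sk k x' y') sk_sub tk_sub.
 unfold NN. apply core; auto. Qed.

Lemma vec_close k e a b r : 0 < fst e^2+snd e^2 ->
  fst a^2+snd a^2 <= 4*r^2 -> fst b^2+snd b^2 <= 4*r^2 ->
  in_cone k (alphaC e a) (betaC e a) -> in_cone k (alphaC e b) (betaC e b) ->
  (fst a - fst b)^2 + (snd a - snd b)^2 <= 4*r^2.
Proof. intros HL Ha Hb Ca Cb.
 assert (HL': 0 < 3/4 * (fst e^2+snd e^2)) by lra.
 destruct (cone_close Ca Cb) as [Hc|Hc];
 rewrite <- alpha_sub, <- beta_sub, !NN_coord in Hc; cbn [vsub fst snd] in Hc;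
 apply (Rmult_le_reg_l (3/4 * (fst e^2+snd e^2))); auto; (eapply Rle_trans; [exact Hc|]); apply Rmult_le_compat_l; lra.
Qed.

Lemma di_sym D E : disks_intersect D E -> disks_intersect E D.
Proof. intros [z [H1 H2]]; exists z; auto. Qed.

Lemma nbr_bound (V : finType) (adj : V -> V -> Prop) (D : V -> disk) :
  (forall v, 0 < dradius (D v)) ->
  (forall u v, adj u v <-> (u <> v /\ disks_intersect (D u) (D v))) -> K4_free adj ->
  forall v (S : seq V), uniq S ->
  (forall u, u \in S -> adj u v /\ dradius (D v) <= dradius (D u)) -> (size S <= 11)%N.
Proof.
 intros Hpos Hadj HK v S HS HSv.
 assert (Hsym: forall x y, adj x y -> adj y x).
 { intros x y H. apply Hadj in H. destruct H as [H1 H2]. apply Hadj. split; auto. now apply di_sym. }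
 destruct S as [|u0 S'] eqn:ES; [done|]. rewrite -ES in HS HSv |- *.
 assert (Hu0: u0 \in S) by (rewrite ES inE eqxx; done).
 set a := fun u => shrink (D v) (D u).
 assert (Hgood: forall u, u \in S -> shrink_good (D v) (D u) (a u)).
 { intros u Hu. destruct (HSv u Hu) as [H1 H2]. apply shrink_ok; auto.
   apply Hadj in H1. destruct H1 as [_ H1]. now apply di_sym. }
 set p := a u0.
 set e := if Rle_dec (fst p^2+snd p^2) 0 then (1,0) else p.
 assert (HL: 0 < fst e^2 + snd e^2).
 { unfold e. destruct Rle_dec as [H|H]; cbn [fst snd is_left]. simpl; lra.
   assert (0 <= fst p^2) by apply pow2_ge_0. assert (0 <= snd p^2) by apply pow2_ge_0. lra. }
 assert (Hp: 0 <= alphaC e p /\ betaC e p = 0).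
 { unfold e. destruct Rle_dec as [H|H]; cbn [is_left].
   - assert (0 <= fst p^2) by apply pow2_ge_0. assert (0 <= snd p^2) by apply pow2_ge_0.
     assert (E1: fst p = 0) by nra. assert (E2: snd p = 0) by nra.
     unfold alphaC, betaC. rewrite E1 E2. split; [lra|ring].
   - unfold alphaC, betaC. split; [|ring].
     replace (fst p * (qq * fst p + snd p / 2) - snd p * (fst p / 2 - qq * snd p))
       with (qq * (fst p^2 + snd p^2)) by field.
     apply Rmult_le_pos; [unfold qq; apply Rmult_le_pos; [apply sqrt_pos|lra] | lra]. }
 set k := fun u => cone_of (alphaC e (a u)) (betaC e (a u)).
 assert (Hcl: forall j x y, x \in S -> y \in S ->
    in_cone j (alphaC e (a x)) (betaC e (a x)) -> in_cone j (alphaC e (a y)) (betaC e (a y)) ->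
    x <> y -> adj x y).
 { intros j x y Hx Hy Cx Cy Hne. apply Hadj. split; auto.
   destruct (HSv x Hx) as [_ Rx]. destruct (HSv y Hy) as [_ Ry].
   pose proof (Hgood x Hx) as Gx. pose proof (Hgood y Hy) as Gy.
   apply (mid_ok (Hpos v) Rx Ry Gx Gy).
   apply (vec_close HL (proj1 Gx) (proj1 Gy) Cx Cy). }
 apply (@count_bound _ S k (fun x y => x <> y -> adj x y) u0); auto.
 - unfold k. fold p. destruct Hp as [Hp1 Hp2]. rewrite Hp2. apply cone_of_0; auto.
 - intros x _; apply cone_of_lt.
 - intros T' HT' Hsub Hpair.
   destruct T' as [|x [|y [|z T'']]]; try done.
   exfalso. apply HK.
   move: HT' => /= /andP [Hx /andP [Hy /andP [Hz _]]].
   rewrite !inE !negb_or in Hx Hy.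
   move: Hx => /andP [Hxy /andP [Hxz _]]. move: Hy => /andP [Hyz _].
   assert (xS: x \in S) by (apply Hsub; rewrite !inE eqxx; done).
   assert (yS: y \in S) by (apply Hsub; rewrite !inE eqxx orbT; done).
   assert (zS: z \in S) by (apply Hsub; rewrite !inE eqxx !orbT; done).
   assert (Axy: adj x y) by (apply Hpair; rewrite ?inE ?eqxx ?orbT //; first [apply/eqP; assumption | assumption]).
   assert (Axz: adj x z) by (apply Hpair; rewrite ?inE ?eqxx ?orbT //; first [apply/eqP; assumption | assumption]).
   assert (Ayz: adj y z) by (apply Hpair; rewrite ?inE ?eqxx ?orbT //; first [apply/eqP; assumption | assumption]).
   destruct (HSv x xS) as [Avx _]. destruct (HSv y yS) as [Avy _]. destruct (HSv z zS) as [Avz _].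
   assert (Nv: forall w, adj w v -> v <> w).
   { intros w Hw Ew. subst w. apply Hadj in Hw. tauto. }
   exists v, x, y, z. split.
   + repeat split; try (apply Nv; assumption); apply/eqP; assumption.
   + repeat split; auto.
 - intros x y Hx Hy Hk Hne. unfold k in Hk.
   apply (Hcl (k x) x y Hx Hy); unfold k; [apply cone_of_ok| rewrite Hk; apply cone_of_ok | exact Hne].
 - intros x Hx Hk5.
   assert (C5: in_cone 5 (alphaC e p) (betaC e p)).
   { destruct Hp as [Hp1 Hp2]. unfold in_cone; simpl. rewrite Hp2. lra. }
   assert (Cx: in_cone 5 (alphaC e (a x)) (betaC e (a x))).
   { rewrite -Hk5. apply cone_of_ok. }
   split; intros Hne.
   + exact (Hcl 5%nat u0 x Hu0 Hx C5 Cx Hne).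
   + exact (Hcl 5%nat x u0 Hx Hu0 Cx C5 Hne).
Qed.

Theorem lemma6 (V : finType) (adj : V -> V -> Prop) :
  is_disk_graph adj -> K4_free adj -> degenerate 11 adj.
Proof.
 intros [D [Dinj [Hpos Hadj]]] HK.
 set le := fun x y : V => if Rle_dec (dradius (D y)) (dradius (D x)) then true else false.
 assert (Htot: total le).
 { intros x y; unfold le; do 2 destruct Rle_dec; auto; lra. }
 assert (Htr: transitive le).
 { intros y x z; unfold le; do 3 destruct Rle_dec; auto; lra. }
 exists (sort le (enum V)). split; [|split].
 - by rewrite sort_uniq enum_uniq.
 - by move=> v; rewrite mem_sort mem_enum.
 - intros s1 s2 v Es S HSu HS.
   apply (@nbr_bound V adj D Hpos Hadj HK v S HSu). intros u Hu. destruct (HS u Hu) as [Hu1 Huv]. split; auto.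
   have Hs := sort_sorted Htot (enum V).
   rewrite (sorted_pairwise Htr) Es pairwise_cat in Hs.
   move: Hs => /andP [/allrelP Hrel _].
   have := Hrel u v Hu1 (mem_head v s2). unfold le. destruct Rle_dec; [done|discriminate].
Qed.
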